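(* For every integer $n\geq 4$, the $2$-extra edge-connectivity of the $n$-dimensional augmented cube satisfies $\lambda_2(AQ_n)=6n-9$.
   Context: The $n$-dimensional augmented cube $AQ_n$ has vertex set $\{0,1\}^n$, vertices written as strings $X=x_nx_{n-1}\cdots x_1$. For $1\le i\le n$ let $X_i=x_n\cdots x_{i+1}\bar x_i x_{i-1}\cdots x_1$ (flip bit $i$) and $\overline{X}_i=x_n\cdots x_{i+1}\bar x_i\bar x_{i-1}\cdots\bar x_1$ (flip bits $i,i-1,\dots,1$), where $\bar x=1-x$. Two distinct vertices $X,Y$ are adjacent iff $Y=X_i$ for some $1\le i\le n$ or $Y=\overline{X}_i$ for some $2\le i\le n$. For a graph $G$ and integer $h\ge0$, an edge set $F\subseteq E(G)$ is an $h$-edge-cut if $G-F$ is disconnected and every component of $G-F$ has more than $h$ vertices; the $h$-extra edge-connectivity $\lambda_h(G)$ is the minimum cardinality of an $h$-edge-cut of $G$. *)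

(* Defs.v *)
From mathcomp Require Import all_boot.
Set Implicit Arguments. Unset Strict Implicit. Unset Printing Implicit Defensive.

(* Vertices of AQ_n: binary strings x_n ... x_1, encoded as functions
   'I_n -> bool; bit x_(k+1) is the value at the ordinal k. *)
Definition aq_vertex (n : nat) := {ffun 'I_n -> bool}.

(* X_i : flip bit i (here i is given as the ordinal i-1). *)
Definition flip1 n (X : aq_vertex n) (i : 'I_n) : aq_vertex n :=
  [ffun j : 'I_n => if j == i then ~~ X j else X j].

(* overline X_i : flip bits i, i-1, ..., 1 (ordinals 0 .. i-1). *)
Definition flipLow n (X : aq_vertex n) (i : 'I_n) : aq_vertex n :=
  [ffun j : 'I_n => if (j <= i)%N then ~~ X j else X j].

(* Adjacency in AQ_n: Y = X_i (1 <= i <= n) or Y = overline X_i (2 <= i <= n);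
   in ordinal terms, overline X uses ordinals i with 1 <= i. *)
Definition aq_adj n : rel (aq_vertex n) :=
  fun X Y => (X != Y) &&
    [exists i : 'I_n, (Y == flip1 X i) || ((1 <= i)%N && (Y == flipLow X i))].

Definition aq_edges n : {set {set aq_vertex n}} :=
  [set e | [exists X, exists Y, aq_adj X Y && (e == [set X; Y])]].

Definition adj_minus n (F : {set {set aq_vertex n}}) : rel (aq_vertex n) :=
  fun X Y => aq_adj X Y && ([set X; Y] \notin F).

Definition is_h_edge_cut (n : nat) (h : nat) (F : {set {set aq_vertex n}}) : Prop :=
  [/\ F \subset aq_edges n,
      exists X Y, ~~ connect (adj_minus F) X Y
    & forall X, (h < #|[set Y | connect (adj_minus F) X Y]|)%N ].

Definition extra_edge_conn_is (n : nat) (h m : nat) : Prop :=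
  (exists F, @is_h_edge_cut n h F /\ #|F| = m) /\
  (forall F, @is_h_edge_cut n h F -> (m <= #|F|)%N).

(* Main.v *)
Require Import Defs.
From mathcomp Require Import all_boot zify.
Set Implicit Arguments. Unset Strict Implicit. Unset Printing Implicit Defensive.

Definition valid n (d : 'I_n * bool) : bool := ~~ d.2 || (0 < d.1)%N.
Definition nu n (x : aq_vertex n) (d : 'I_n * bool) : aq_vertex n :=
  if d.2 then flipLow x d.1 else flip1 x d.1.

Lemma bneg (b : bool) : b = ~~ b -> False. Proof. by case: b. Qed.

Lemma nu_invol n (d : 'I_n * bool) : involutive (fun x : aq_vertex n => nu x d).
Proof.
move=> x; apply/ffunP=> j; rewrite /nu; case: d.2; rewrite !ffunE.
  by case: (j <= d.1)%N; rewrite ?negbK.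
by case: (j == d.1); rewrite ?negbK.
Qed.

Lemma nu_inj1 n (d : 'I_n * bool) : injective (fun y : aq_vertex n => nu y d).
Proof. exact: (can_inj (nu_invol d)). Qed.

Lemma nu_neq n (x : aq_vertex n) d : nu x d != x.
Proof.
apply/eqP => /ffunP /(_ d.1); rewrite /nu; case: d.2; rewrite ffunE ?eqxx ?leqnn;
  by move/esym/bneg.
Qed.

Lemma nu_inj n (x : aq_vertex n) d d' : valid d -> valid d' -> nu x d = nu x d' -> d = d'.
Proof.
case: d d' => [i b] [i' b']; rewrite /valid /nu /=.
have Ek (f g : aq_vertex n) k : f = g -> f k = g k by move->.
have mixed (j j' : 'I_n) : (0 < j')%N -> flip1 x j = flipLow x j' -> False.
  move=> hj' E; have := Ek _ _ j' E; rewrite !ffunE leqnn.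
  case: eqP => [ej|_]; last by move/bneg.
  have hk : (j'.-1 < n)%N by have := ltn_ord j'; lia.
  have := Ek _ _ (Ordinal hk) E; rewrite !ffunE /=.
  have -> : (Ordinal hk == j) = false by apply/eqP => /(congr1 val) /=; rewrite -ej /=; lia.
  have -> : (j'.-1 <= j')%N by lia.
  by move/bneg.
case: b; case: b' => /= v v' E.
- case: (ltngtP i i') => h.
  + have := Ek _ _ i' E; rewrite !ffunE leqnn; have -> : (i' <= i)%N = false by lia.
    by move/bneg.
  + have := Ek _ _ i E; rewrite !ffunE leqnn; have -> : (i <= i')%N = false by lia.
    by move/esym/bneg.
  + by congr (_, _); apply: val_inj.
- by case: (mixed i' i v (esym E)).
- by case: (mixed i i' v' E).
- have := Ek _ _ i E; rewrite !ffunE eqxx; case: eqP => [->//|_]; by move/esym/bneg.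
Qed.

Lemma adj_nu n (x y : aq_vertex n) : aq_adj x y = [exists d, valid d && (y == nu x d)].
Proof.
rewrite /aq_adj; apply/andP/existsP.
  case=> _ /existsP [i /orP [/eqP->|/andP [h /eqP ->]]].
    by exists (i, false); rewrite /nu /= eqxx.
  by exists (i, true); rewrite /valid /nu /= h eqxx.
case=> d /andP [vd /eqP ->]; split; first by rewrite eq_sym nu_neq.
apply/existsP; exists d.1; move: vd; rewrite /nu /valid; case: d.2 => /= h.
  by rewrite h eqxx orbT.
by rewrite eqxx.
Qed.

Lemma adj_sym n (x y : aq_vertex n) : aq_adj x y = aq_adj y x.
Proof.
suff H : forall x y : aq_vertex n, aq_adj x y -> aq_adj y x.
  by apply/idP/idP; apply: H.
move=> {}x {}y; rewrite !adj_nu => /existsP [d /andP [vd /eqP ->]].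
by apply/existsP; exists d; rewrite vd nu_invol eqxx.
Qed.

Definition bd n (S : {set aq_vertex n}) : nat :=
  \sum_(d : 'I_n * bool) \sum_(x : aq_vertex n) [&& valid d, x \in S & nu x d \notin S].

Lemma sum_card (T : finType) (P : pred T) : \sum_(x : T) P x = #|[set x | P x]|.
Proof.
rewrite -sum1_card [RHS]big_mkcond /=; apply: eq_bigr => x _; rewrite inE; by case: (P x).
Qed.

Lemma bd_compl n (S : {set aq_vertex n}) : bd (~: S) = bd S.
Proof.
rewrite /bd; apply: eq_bigr => d _.
rewrite (reindex_inj (@nu_inj1 n d)); apply: eq_bigr => x _.
rewrite nu_invol !inE; case: (valid d); case: (x \in S); by case: (nu x d \in S).
Qed.

Lemma card_V n : #|aq_vertex n| = 2 ^ n.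
Proof. by rewrite /aq_vertex card_ffun card_bool card_ord. Qed.

Lemma card_compl n (S : {set aq_vertex n}) : #|~: S| = 2 ^ n - #|S|.
Proof. by rewrite (cardsCs S) card_V; have := max_card (~: S); rewrite card_V; lia. Qed.

Lemma card_valid n : (0 < n)%N -> #|[set d : 'I_n * bool | valid d]| = (2 * n).-1.
Proof.
move=> n0.
have -> : [set d : 'I_n * bool | valid d] = [set~ (Ordinal n0, true)].
  apply/setP => -[i b]; rewrite !inE /valid /= xpair_eqE.
  case: b => //=; rewrite -val_eqE /=; by case: (val i).
by rewrite cardsC1 card_prod card_ord card_bool mulnC.
Qed.

Definition nbrs n (x : aq_vertex n) : {set aq_vertex n} :=
  [set nu x d | d in [set d : 'I_n * bool | valid d]].

Lemma card_nbrs n (x : aq_vertex n) : (0 < n)%N -> #|nbrs x| = (2 * n).-1.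
Proof.
move=> n0; rewrite card_in_imset ?card_valid // => d d'; rewrite !inE; exact: nu_inj.
Qed.

Lemma adj_nbrs n (x y : aq_vertex n) : aq_adj x y = (y \in nbrs x).
Proof.
rewrite adj_nu; apply/existsP/imsetP.
  by case=> d /andP [vd /eqP ->]; exists d; rewrite ?inE.
by case=> d; rewrite inE => vd ->; exists d; rewrite vd eqxx.
Qed.

Lemma nbrs_notx n (x : aq_vertex n) : x \notin nbrs x.
Proof. by apply/imsetP => -[d _ /eqP]; rewrite eq_sym (negbTE (nu_neq x d)). Qed.

Lemma vertex_count n (x : aq_vertex n) (S : {set aq_vertex n}) :
  \sum_(d : 'I_n * bool) (valid d && (nu x d \notin S)) + #|nbrs x :&: S| = #|nbrs x|.
Proof.
rewrite sum_card.
have -> : #|nbrs x :&: S| = #|[set d : 'I_n * bool | valid d && (nu x d \in S)]|.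
  rewrite -(@card_in_imset _ _ (nu x)); last first.
    by move=> d d'; rewrite !inE => /andP [vd _] /andP [vd' _]; exact: nu_inj.
  apply: eq_card => y; rewrite !inE; apply/andP/imsetP.
    by case=> /imsetP [d]; rewrite inE => vd -> yS; exists d; rewrite ?inE ?vd.
  by case=> d; rewrite inE => /andP [vd dS] ->; split => //; apply/imsetP; exists d; rewrite ?inE.
rewrite /nbrs card_in_imset; last by move=> d d'; rewrite !inE; exact: nu_inj.
rewrite -(cardsID [set d : 'I_n * bool | nu x d \in S] [set d : 'I_n * bool | valid d]) addnC; congr (_ + _); apply: eq_card => d;
  by rewrite !inE // andbC.
Qed.

Lemma bd_vertex n (S : {set aq_vertex n}) :
  bd S = \sum_(x in S) \sum_(d : 'I_n * bool) (valid d && (nu x d \notin S)).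
Proof.
rewrite /bd exchange_big /= [RHS]big_mkcond /=; apply: eq_bigr => x _.
case: (x \in S); first by apply: eq_bigr => d _; case: (valid d).
by rewrite big1 // => d _; rewrite andbF.
Qed.

Lemma bd_local n (S : {set aq_vertex n}) : (0 < n)%N ->
  #|S| * ((2 * n).-1 - (#|S|).-1) <= bd S.
Proof.
move=> n0; rewrite bd_vertex -sum_nat_const; apply: leq_sum => x xS.
have := vertex_count x S; rewrite card_nbrs //.
have : #|nbrs x :&: S| <= #|S :\ x|.
  apply: subset_leq_card; apply/subsetP => y; rewrite !inE => /andP [yn yS].
  by rewrite yS andbT; apply: contraTneq yn => ->; exact: nbrs_notx.
have := cardsD1 x S; rewrite xS; lia.
Qed.

Definition wd n (k : 'I_n) : 'I_n.+1 := widen_ord (leqnSn n) k.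
Definition ext n (b : bool) (y : aq_vertex n) : aq_vertex n.+1 :=
  [ffun j : 'I_n.+1 => odflt b (omap y (insub (nat_of_ord j)))].
Definition drop n (x : aq_vertex n.+1) : aq_vertex n := [ffun k => x (wd k)].

Lemma ordS_case n (j : 'I_n.+1) : j = ord_max \/ exists k : 'I_n, j = wd k.
Proof.
case: (ltnP j n) => h.
  by right; exists (Ordinal h); apply: val_inj.
by left; apply: val_inj => /=; have := ltn_ord j; lia.
Qed.

Lemma ext_max n b (y : aq_vertex n) : ext b y ord_max = b.
Proof. by rewrite ffunE insubF //= ltnn. Qed.

Lemma ext_wd n b (y : aq_vertex n) k : ext b y (wd k) = y k.
Proof. by rewrite ffunE /= (_ : insub (nat_of_ord (wd k)) = Some k) // valK. Qed.

Lemma wd_neq_max n (k : 'I_n) : (wd k == ord_max) = false.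
Proof. by apply/eqP => /(congr1 val) /=; have := ltn_ord k; lia. Qed.

Lemma extK n (x : aq_vertex n.+1) : ext (x ord_max) (drop x) = x.
Proof.
apply/ffunP => j; case: (ordS_case j) => [->|[k ->]]; first by rewrite ext_max.
by rewrite ext_wd ffunE.
Qed.

Lemma drop_ext n b (y : aq_vertex n) : drop (ext b y) = y.
Proof. by apply/ffunP => k; rewrite ffunE ext_wd. Qed.

Lemma ext_inj n b : injective (@ext n b).
Proof. by move=> y y' E; rewrite -(drop_ext b y) E drop_ext. Qed.

Lemma flip1E n (x : aq_vertex n) i j : flip1 x i j = if j == i then ~~ x j else x j.
Proof. by rewrite ffunE. Qed.
Lemma flipLowE n (x : aq_vertex n) i j : flipLow x i j = if (j <= i)%N then ~~ x j else x j.
Proof. by rewrite ffunE. Qed.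

Lemma nu_ext_wd n b (y : aq_vertex n) (k : 'I_n) c :
  nu (ext b y) (wd k, c) = ext b (nu y (k, c)).
Proof.
apply/ffunP => j; rewrite /nu /=; case: (ordS_case j) => [->|[k' ->]].
  case: c; rewrite ?flip1E ?flipLowE !ext_max //.
    by rewrite leqNgt (_ : (k < n)%N) // ltn_ord.
  by rewrite eq_sym wd_neq_max.
case: c; rewrite ?flip1E ?flipLowE !ext_wd ?flip1E ?flipLowE /=.
  by [].
by rewrite -val_eqE /= val_eqE.
Qed.

Definition cmp n (y : aq_vertex n) : aq_vertex n := [ffun k => ~~ y k].
Lemma cmpE n (y : aq_vertex n) k : cmp y k = ~~ y k.
Proof. by rewrite ffunE. Qed.

Lemma cmp_inj n : injective (@cmp n).
Proof. by move=> y y' /ffunP E; apply/ffunP => k; have := E k; rewrite !cmpE => /negb_inj. Qed.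

Lemma nu_ext_max n b (y : aq_vertex n) (c : bool) :
  nu (ext b y) (ord_max, c) = ext (~~ b) (if c then cmp y else y).
Proof.
apply/ffunP => j; rewrite /nu /=; case: (ordS_case j) => [->|[k' ->]].
  by case: c; rewrite ?flip1E ?flipLowE !ext_max ?eqxx ?leqnn.
case: c; rewrite ?flip1E ?flipLowE !ext_wd /=.
  by rewrite cmpE (_ : (k' <= n)%N) // ltnW.
by rewrite wd_neq_max.
Qed.

Lemma sum_ext n (F : aq_vertex n.+1 -> nat) :
  \sum_x F x = \sum_y F (ext false y) + \sum_y F (ext true y).
Proof.
rewrite (reindex (fun p : bool * aq_vertex n => ext p.1 p.2)) /=; last first.
  exists (fun x : aq_vertex n.+1 => (x ord_max, drop x)) => [[b y] _ | x _] /=.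
    by rewrite ext_max drop_ext.
  by rewrite extK.
by rewrite -(pair_bigA _ (fun b y => F (ext b y))) big_bool addnC.
Qed.

Definition half n (S : {set aq_vertex n.+1}) (b : bool) : {set aq_vertex n} :=
  [set y | ext b y \in S].

Lemma card_half n (S : {set aq_vertex n.+1}) : #|S| = #|half S false| + #|half S true|.
Proof.
rewrite -!sum1_card big_mkcond /= sum_ext.
by congr (_ + _); rewrite [RHS]big_mkcond; apply: eq_bigr => y _; rewrite inE.
Qed.

Lemma lb_psi (T : finType) (psi : T -> T) (A B : {set T}) : injective psi ->
  #|A| - #|B| <= \sum_y ((y \in A) && (psi y \notin B)).
Proof.
move=> ipsi; rewrite leq_subLR.
have -> : #|B| = \sum_y (psi y \in B).
  by rewrite sum_card -(card_preimset B ipsi); apply: eq_card => y; rewrite !inE.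
rewrite -big_split /= -sum1_card big_mkcond /=; apply: leq_sum => y _.
by case: (y \in A); case: (psi y \in B).
Qed.

Lemma bd_pair n (S : {set aq_vertex n}) :
  bd S = \sum_(i : 'I_n) \sum_(c : bool) \sum_(x : aq_vertex n) [&& valid (i, c), x \in S & nu x (i, c) \notin S].
Proof. by rewrite /bd (pair_bigA _ (fun i c => \sum_x [&& valid (i, c), x \in S & nu x (i, c) \notin S])). Qed.

Lemma bd_step n (S : {set aq_vertex n.+1}) : (0 < n)%N ->
  bd (half S false) + bd (half S true) +
  2 * ((#|half S false| - #|half S true|) + (#|half S true| - #|half S false|)) <= bd S.
Proof.
move=> n0.
rewrite [bd S]bd_pair.
rewrite big_ord_recr /=.
have -> : \sum_(i < n) \sum_(c : bool) \sum_(x : aq_vertex n.+1)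
      [&& valid (widen_ord (leqnSn n) i, c), x \in S & nu x (widen_ord (leqnSn n) i, c) \notin S]
    = bd (half S false) + bd (half S true).
  rewrite !bd_pair -big_split /=.
  apply: eq_bigr => i _; rewrite -big_split /=; apply: eq_bigr => c _.
  rewrite sum_ext; congr (_ + _); apply: eq_bigr => y _;
    by rewrite (nu_ext_wd _ _ i c) !inE.
rewrite leq_add2l big_bool /=.
have vmax : forall c, valid (@ord_max n, c) by move=> c; rewrite /valid /= n0 orbT.
have G (c : bool) : (#|half S false| - #|half S true|) + (#|half S true| - #|half S false|) <=
    \sum_x [&& valid (@ord_max n, c), x \in S & nu x (@ord_max n, c) \notin S].
  rewrite (sum_ext (fun x : aq_vertex n.+1 => [&& valid (ord_max, c), x \in S & nu x (ord_max, c) \notin S])).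
  pose psi := (fun y : aq_vertex n => if c then cmp y else y).
  have ipsi : injective psi by rewrite /psi; case: (c) => //; exact: cmp_inj.
  apply: leq_add.
    apply: leq_trans (lb_psi _ _ ipsi) _; apply: eq_leq; apply: eq_bigr => y _.
    by rewrite vmax nu_ext_max !inE.
  apply: leq_trans (lb_psi _ _ ipsi) _; apply: eq_leq; apply: eq_bigr => y _.
  by rewrite vmax nu_ext_max !inE.
by rewrite mul2n -addnn; apply: leq_add; [exact: (G true) | exact: (G false)].
Qed.

Lemma local_k n (S : {set aq_vertex n}) k : (0 < n)%N -> #|S| = k -> (0 < k)%N ->
  k * (2 * n - k) <= bd S.
Proof.
move=> n0 hk k0; apply: leq_trans (bd_local S n0); rewrite hk.
apply: leq_mul => //; lia.
Qed.

Lemma local_facts n (S : {set aq_vertex n}) : (0 < n)%N ->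
  [/\ #|S| = 1 -> 2 * n - 1 <= bd S, #|S| = 2 -> 2 * (2 * n - 2) <= bd S
    & #|S| = 3 -> 3 * (2 * n - 3) <= bd S].
Proof.
move=> n0; split => h.
- by have := local_k n0 h; rewrite mul1n; apply.
- exact: local_k n0 h _.
- exact: local_k n0 h _.
Qed.

Lemma compl_facts n (S : {set aq_vertex n}) : (0 < n)%N ->
  [/\ 2 ^ n - #|S| = 1 -> 2 * n - 1 <= bd S, 2 ^ n - #|S| = 2 -> 2 * (2 * n - 2) <= bd S
    & 2 ^ n - #|S| = 3 -> 3 * (2 * n - 3) <= bd S].
Proof.
move=> n0; rewrite -card_compl -(bd_compl S); exact: local_facts.
Qed.

Lemma card_le n (S : {set aq_vertex n}) : #|S| <= 2 ^ n.
Proof. by rewrite -card_V max_card. Qed.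

Lemma claim3 (S : {set aq_vertex 3}) : (3 <= #|S|)%N -> #|S| + 3 <= 2 ^ 3 -> 8 <= bd S.
Proof.
move=> h1; rewrite (_ : 2 ^ 3 = 8) // => h2.
have [A B C] := local_facts S isT.
have [A' B' C'] := compl_facts S isT.
have : #|S| = 3 \/ #|S| = 4 \/ #|S| = 5 by lia.
case=> [h|[h|h]].
- by have := C h; lia.
- by have := @local_k 3 S 4 isT h isT.
- by have := C'; rewrite h => /(_ erefl); lia.
Qed.

Lemma pow_bound n : (3 <= n)%N -> 6 * n <= 2 * 2 ^ n + 3.
Proof.
elim: n => // n IH h; rewrite expnS; case: (leqP n 2) => h2.
  by have -> : n = 2 by lia.
by have := IH h2; lia.
Qed.

Lemma half_cases n (T : {set aq_vertex n}) : (3 <= n)%N ->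
  (forall S : {set aq_vertex n}, (3 <= #|S|)%N -> #|S| + 3 <= 2 ^ n -> 6 * n - 10 <= bd S) ->
  let s := #|T| in let b := bd T in let N := 2 ^ n in
  (s = 0 /\ 0 <= b) \/ (s = 1 /\ 2 * n - 1 <= b) \/ (s = 2 /\ 2 * (2 * n - 2) <= b) \/
  (s = 3 /\ 3 * (2 * n - 3) <= b) \/
  [/\ 4 <= s, s + 3 <= N & 6 * n - 10 <= b] \/ (s = N - 2 /\ 2 * (2 * n - 2) <= b) \/
  (s = N - 1 /\ 2 * n - 1 <= b) \/ (s = N /\ 0 <= b).
Proof.
move=> n3 IH s b N.
have n0 : (0 < n)%N by lia.
have [A B C] := local_facts T n0.
have [A' B' C'] := compl_facts T n0.
have hs : s <= N := card_le T.
have N8 : 2 ^ 3 <= 2 ^ n by rewrite leq_exp2l.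
rewrite (_ : 2 ^ 3 = 8) // -/N in N8.
have : s = 0 \/ s = 1 \/ s = 2 \/ s = 3 \/ (4 <= s /\ s + 3 <= N) \/ s = N - 2 \/ s = N - 1 \/ s = N.
  by lia.
case=> [h|[h|[h|[h|[[h1 h2]|[h|[h|h]]]]]]].
- by left.
- by right; left; split => //; apply: A.
- by do 2 right; left; split => //; apply: B.
- by do 3 right; left; split => //; apply: C.
- do 4 right; left; split => //; apply: IH => //; rewrite -/s; lia.
- by do 5 right; left; split => //; apply: B'; rewrite -/s -/N; lia.
- by do 6 right; left; split => //; apply: A'; rewrite -/s -/N; lia.
- by do 7 right.
Qed.
Lemma claim_step n : (3 <= n)%N ->
  (forall S : {set aq_vertex n}, (3 <= #|S|)%N -> #|S| + 3 <= 2 ^ n -> 6 * n - 10 <= bd S) ->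
  forall S : {set aq_vertex n.+1}, (3 <= #|S|)%N -> #|S| + 3 <= 2 ^ n.+1 -> 6 * n.+1 - 9 <= bd S.
Proof.
move=> n3 IH S.
wlog hs : S / #|S| <= 2 ^ n.
  move=> W h1 h2; case: (leqP #|S| (2 ^ n)) => hh; first exact: W.
  rewrite -bd_compl; apply: W; rewrite card_compl expnS; move: h1 h2 hh; rewrite expnS; lia.
move=> h1 h2.
have n0 : (0 < n)%N by lia.
have := bd_step S n0.
have := card_half S.
have P := pow_bound n3.
have N8 : 2 ^ 3 <= 2 ^ n by rewrite leq_exp2l.
rewrite (_ : 2 ^ 3 = 8) // in N8.
have := half_cases (half S false) n3 IH; have := half_cases (half S true) n3 IH.
rewrite /=; rewrite expnS in h2.
move: (#|half S false|) (#|half S true|) (bd (half S false)) (bd (half S true)) (2 ^ n) (bd S) (#|S|) P N8 hs h2 h1 => s0 s1 b0 b1 N bS s P N8 hs h2 h1.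
clear IH S.
case=> [[? ?]|[[? ?]|[[? ?]|[[? ?]|[[? ? ?]|[[? ?]|[[? ?]|[? ?]]]]]]]];
case=> [[? ?]|[[? ?]|[[? ?]|[[? ?]|[[? ? ?]|[[? ?]|[[? ?]|[? ?]]]]]]]]; lia.
Qed.

Lemma claim n : (3 <= n)%N ->
  forall S : {set aq_vertex n}, (3 <= #|S|)%N -> #|S| + 3 <= 2 ^ n -> 6 * n - 10 <= bd S.
Proof.
elim: n => // n IH h S h1 h2.
case: (ltnP n 3) => hn.
  have e : n = 2 by lia.
  by subst n; apply: claim3.
by have := claim_step hn (IH hn) h1 h2; lia.
Qed.

Lemma lower n (S : {set aq_vertex n}) : (4 <= n)%N ->
  (3 <= #|S|)%N -> #|S| + 3 <= 2 ^ n -> 6 * n - 9 <= bd S.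
Proof.
case: n S => // m S h h1 h2.
have hm : (3 <= m)%N by lia.
exact: (claim_step hm (claim hm) h1 h2).
Qed.

Definition bpairs n (S : {set aq_vertex n}) :=
  [set p : aq_vertex n * ('I_n * bool) | [&& valid p.2, p.1 \in S & nu p.1 p.2 \notin S]].
Definition edge_of n (p : aq_vertex n * ('I_n * bool)) : {set aq_vertex n} := [set p.1; nu p.1 p.2].

Lemma bd_card n (S : {set aq_vertex n}) : bd S = #|bpairs S|.
Proof.
rewrite /bd exchange_big /= (pair_bigA _ (fun x d => ([&& valid d, x \in S & nu x d \notin S] : nat))).
by rewrite sum_card.
Qed.

Lemma edge_inj n (S : {set aq_vertex n}) : {in bpairs S &, injective (@edge_of n)}.
Proof.
move=> [x d] [x' d']; rewrite !inE /edge_of /= => /and3P [vd xS yS] /and3P [vd' xS' yS'] E.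
have ex : x = x'.
  have : x \in [set x'; nu x' d'] by rewrite -E !inE eqxx.
  rewrite !inE => /orP [/eqP //|/eqP ex]; by move: yS'; rewrite -ex xS.
subst x'.
have : nu x d \in [set x; nu x d'] by rewrite -E !inE eqxx orbT.
rewrite !inE => /orP [/eqP ey|/eqP ey]; first by move: yS; rewrite ey xS.
by rewrite (nu_inj vd vd' ey).
Qed.

Lemma edge_adj n (p : aq_vertex n * ('I_n * bool)) : valid p.2 -> aq_adj p.1 (nu p.1 p.2).
Proof. by move=> v; rewrite adj_nu; apply/existsP; exists p.2; rewrite v eqxx. Qed.

Lemma adjm_sym n (F : {set {set aq_vertex n}}) : symmetric (adj_minus F).
Proof. by move=> x y; rewrite /adj_minus adj_sym setUC. Qed.

Lemma lower_bound n (F : {set {set aq_vertex n}}) : (4 <= n)%N -> is_h_edge_cut 2 F -> 6 * n - 9 <= #|F|.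
Proof.
move=> h [sub [X [Y nc]] comp].
pose S := [set Z | connect (adj_minus F) X Z].
have csym := sym_connect_sym (@adjm_sym n F).
have h1 : (3 <= #|S|)%N by apply: comp.
have h2 : #|S| + 3 <= 2 ^ n.
  have : #|[set Z | connect (adj_minus F) Y Z]| <= #|~: S|.
    apply: subset_leq_card; apply/subsetP => Z; rewrite !inE => cYZ.
    apply/negP => cXZ; move/negP: nc; apply; apply: connect_trans cXZ _; by rewrite csym.
  rewrite card_compl => hle; have h3 := leq_trans (comp Y) hle.
  by rewrite -(leq_subRL 3 (card_le S)).
apply: leq_trans (lower h h1 h2) _.
rewrite bd_card -(card_in_imset (@edge_inj n S)); apply: subset_leq_card.
apply/subsetP => e /imsetP [[x d] pP ->]; move: (pP); rewrite inE /= => /and3P [vd xS yS].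
apply/negPn/negP => nF; move/negP: yS; apply; rewrite inE.
move: xS; rewrite inE => cx; apply: connect_trans cx (connect1 _).
by rewrite /adj_minus; apply/andP; split; [exact: (edge_adj (p := (x, d)) vd) | exact: nF].
Qed.

Lemma upper n : (4 <= n)%N -> exists F, @is_h_edge_cut n 2 F /\ #|F| = 6 * n - 9.
Proof.
move=> h.
have n0 : (0 < n)%N by lia.
have n1 : (1 < n)%N by lia.
have n2 : (2 < n)%N by lia.
pose i0 := Ordinal n0; pose i1 := Ordinal n1; pose i2 := Ordinal n2.
pose A : aq_vertex n := [ffun _ => false].
pose B := flip1 A i0. pose C := flipLow A i1.
have AB : aq_adj A B by rewrite adj_nu; apply/existsP; exists (i0, false); rewrite /= eqxx.
have AC : aq_adj A C by rewrite adj_nu; apply/existsP; exists (i1, true); rewrite /= eqxx.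
have BC : aq_adj B C.
  rewrite adj_nu; apply/existsP; exists (i1, false); rewrite /=.
  apply/eqP/ffunP => j; rewrite /C /B /A !ffunE -!val_eqE /=.
  by case: (val j) => [|[|k]].
pose T : {set aq_vertex n} := A |: [set B; C].
have mT : forall z : aq_vertex n, z \in T -> z = A \/ z = B \/ z = C.
  move=> z; rewrite /T !inE; case: eqP => [->|_]; first by left.
  case: eqP => [->|_]; first by right; left.
  by case: eqP => [->|_] //; right; right.
have Tadj : forall x y : aq_vertex n, x \in T -> y \in T -> x != y -> aq_adj x y.
  move=> x y /mT [->|[->|->]] /mT [->|[->|->]]; rewrite ?eqxx // => _;
    by rewrite ?AB ?AC ?BC // adj_sym ?AB ?AC ?BC.
have neq : forall x y : aq_vertex n, aq_adj x y -> x != y by move=> x y; rewrite /aq_adj => /andP [].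
have cardT : #|T| = 3.
  rewrite /T cardsU1 cards2 !inE (neq _ _ BC) (negbTE (neq _ _ AB)) (negbTE (neq _ _ AC)).
  by [].
pose F := [set edge_of p | p in bpairs T].
have cardF : #|F| = bd T by rewrite card_in_imset ?bd_card //; exact: edge_inj.
have bdT : bd T = 6 * n - 9.
  rewrite bd_vertex (eq_bigr (fun _ => 2 * n - 3)) ?sum_nat_const ?cardT; first by lia.
  move=> x xT; have := vertex_count x T; rewrite card_nbrs //.
  have -> : nbrs x :&: T = T :\ x.
    apply/setP => y; rewrite in_setI in_setD1 -adj_nbrs.
    case yT: (y \in T); rewrite ?andbF ?andbT //.
    apply/idP/idP => [/neq|]; first by rewrite eq_sym.
    by move=> ne; apply: Tadj; rewrite // eq_sym.
  have := cardsD1 x T; rewrite xT cardT; lia.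
have Fmem : forall x y : aq_vertex n, x \in T -> y \notin T -> aq_adj x y -> [set x; y] \in F.
  move=> x y xT yT; rewrite adj_nu => /existsP [d /andP [vd /eqP ey]].
  apply/imsetP; exists (x, d); first by rewrite inE /= vd xT -ey yT.
  by rewrite /edge_of /= ey.
have Fedge : forall e, e \in F -> exists x y, [/\ x \in T, y \notin T, aq_adj x y & e = [set x; y]].
  move=> e /imsetP [[x d] pP ->]; move: (pP); rewrite inE /= => /and3P [vd xT yT].
  by exists x, (nu x d); split => //; exact: (edge_adj (p := (x, d))).
have R_in : forall x y : aq_vertex n, x \in T -> y \in T -> [set x; y] \notin F.
  move=> x y xT yT; apply/negP => /Fedge [x' [y' [_ y'T _ E]]].
  have : y' \in [set x; y] by rewrite E !inE eqxx orbT.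
  by rewrite !inE => /orP [] /eqP ey; move: y'T; rewrite ey ?xT ?yT.
have R_out : forall x y : aq_vertex n, x \notin T -> y \notin T -> [set x; y] \notin F.
  move=> x y xT yT; apply/negP => /Fedge [x' [y' [x'T _ _ E]]].
  have : x' \in [set x; y] by rewrite E !inE eqxx.
  by rewrite !inE => /orP [] /eqP ey; move: x'T; rewrite ey ?(negbTE xT) ?(negbTE yT).
have closedT0 : forall x y : aq_vertex n, adj_minus F x y -> (x \in T) = (y \in T).
  move=> x y; rewrite /adj_minus => /andP [ad nF].
  case xT: (x \in T); case yT: (y \in T) => //.
    by move: nF; rewrite Fmem ?yT.
  by move: nF; rewrite setUC Fmem ?xT // adj_sym.
have closedT : closed (adj_minus F) T by move=> x y /closedT0.
exists F; split; last by rewrite cardF bdT.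
split.
- apply/subsetP => e /Fedge [x [y [_ _ ad ->]]].
  by rewrite inE; apply/existsP; exists x; apply/existsP; exists y; rewrite ad eqxx.
- have Dv : flip1 A i2 i2 = true by rewrite !ffunE eqxx.
  have Av : A i2 = false by rewrite ffunE.
  have Bv : B i2 = false by rewrite /B !ffunE -val_eqE.
  have Cv : C i2 = false by rewrite /C !ffunE.
  exists A, (flip1 A i2); apply/negP => c; have := closed_connect closedT c.
  have AT : A \in T by rewrite !inE eqxx.
  rewrite AT => /esym /mT DT.
  by case: DT => [E|[E|E]]; move: Dv; rewrite E ?Av ?Bv ?Cv.
- move=> X; case XT: (X \in T).
    rewrite -cardT; apply: subset_leq_card; apply/subsetP => y yT; rewrite inE.
    case: (eqVneq X y) => [->|ne]; first exact: connect0.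
    by apply: connect1; rewrite /adj_minus Tadj // R_in.
  have : X |: (nbrs X :\: T) \subset [set Y | connect (adj_minus F) X Y].
    apply/subsetP => y; rewrite in_setU1 in_setD inE => /orP [/eqP ->|/andP [yT yN]]; first exact: connect0.
    by apply: connect1; rewrite /adj_minus adj_nbrs yN R_out ?XT.
  move/subset_leq_card; apply: leq_trans.
  rewrite cardsU1 inE (negbTE (nbrs_notx X)) andbF /=.
  have := cardsID T (nbrs X); have := subset_leq_card (subsetIr (nbrs X) T).
  rewrite card_nbrs // cardT; move: (#|nbrs X :&: T|) (#|nbrs X :\: T|) => a b; lia.
Qed.

Unset Implicit Arguments.

Theorem theorem3p2 (n : nat) : (4 <= n)%N -> extra_edge_conn_is n 2 (6 * n - 9).
Proof.
move=> h; split; first exact: upper.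
by move=> F HF; apply: lower_bound.
Qed.
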